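(* In a snark $G$ with $\pi(G)\ge 5$, no apex is incident with a pair of parallel edges.
   Context: Graphs are finite; loops and multiple edges are allowed. A snark is a $2$-connected cubic graph with no proper $3$-edge-colouring. The perfect matching index $\pi(G)$ is the smallest number of perfect matchings of $G$ whose union is $E(G)$. Inflating a vertex $v$ to a triangle means deleting $v$, adding a triangle on three new vertices, and attaching the three edge-ends formerly incident with $v$ to the three distinct vertices of the triangle; the result is denoted $G^v$. A vertex $v$ of a snark $G$ is an apex if $\pi(G^v)=4$. *)

(* Defs.v *)
(* Multigraphs (loops and multiple edges allowed) are
   represented by darts (half-edges): each dart has an end vertex, and the
   two darts of an edge are swapped by a fixed-point-free involution. *)
From mathcomp Require Import all_boot.
Set Implicit Arguments. Unset Strict Implicit. Unset Printing Implicit Defensive.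

Record multigraph := MultiGraph {
  vtx : finType;
  dart : finType;
  vert : dart -> vtx;
  opp : dart -> dart
}.

Definition wf (G : multigraph) : Prop :=
  (forall d : dart G, opp (opp d) = d) /\ (forall d : dart G, opp d != d).

(* darts (edge-ends) at a vertex; a loop contributes two darts *)
Definition darts_at (G : multigraph) (v : vtx G) : {set dart G} :=
  [set d | vert d == v].

Definition cubic (G : multigraph) : Prop :=
  forall v : vtx G, #|darts_at v| = 3.

Definition adj (G : multigraph) : rel (vtx G) :=
  fun u w => [exists d : dart G, (vert d == u) && (vert (opp d) == w)].

Definition connected (G : multigraph) : Prop :=
  forall u w : vtx G, connect (@adj G) u w.

Definition connected_minus (G : multigraph) (v : vtx G) : Prop :=
  forall u w : vtx G, u != v -> w != v ->
    connect (fun x y => [&& x != v, y != v & adj x y]) u w.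

Definition two_connected (G : multigraph) : Prop :=
  [/\ connected G, 3 <= #|vtx G| & forall v : vtx G, connected_minus v].

(* proper 3-edge-colouring: colour darts, both ends of an edge get the same
   colour, distinct edge-ends at a vertex get distinct colours (so a loop
   is never properly coloured) *)
Definition three_edge_colourable (G : multigraph) : Prop :=
  exists c : dart G -> 'I_3,
    (forall d, c (opp d) = c d) /\
    (forall d1 d2, d1 != d2 -> vert d1 = vert d2 -> c d1 != c d2).

Definition snark (G : multigraph) : Prop :=
  [/\ wf G, two_connected G, cubic G & ~ three_edge_colourable G].

(* a perfect matching, as the set of darts of its edges: closed under opp,
   and exactly one matched edge-end at every vertex (so no loops) *)
Definition perfect_matching (G : multigraph) (M : {set dart G}) : Prop :=
  (forall d, (opp d \in M) = (d \in M)) /\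
  (forall v : vtx G, #|M :&: darts_at v| = 1).

Definition pm_coverable (G : multigraph) (k : nat) : Prop :=
  exists Ms : 'I_k -> {set dart G},
    (forall i, perfect_matching (Ms i)) /\
    (forall d : dart G, exists i, d \in Ms i).

Definition is_pmi (G : multigraph) (k : nat) : Prop :=
  pm_coverable G k /\ (forall j, j < k -> ~ pm_coverable G j).

(* Inflation of v to a triangle.  The new vertices are the old ones other
   than v, plus three triangle vertices indexed by 'I_3.  The edge-ends at v
   are reattached to triangle vertices according to g : dart G -> 'I_3
   (required to be injective on the darts at v).  Triangle edge i joins
   triangle vertex i to triangle vertex i+1 (mod 3). *)
Section Inflate.
Variables (G : multigraph) (v : vtx G) (g : dart G -> 'I_3).

Definition infl_vtx : finType := ({x : vtx G | x != v} + 'I_3)%type.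
Definition infl_dart : finType := (dart G + ('I_3 * bool))%type.

Definition infl_vert (d : infl_dart) : infl_vtx :=
  match d with
  | inl e => match insub (vert e) with
             | Some x => inl x
             | None => inr (g e)
             end
  | inr (i, true) => inr i
  | inr (i, false) => inr (ordS i)
  end.

Definition infl_opp (d : infl_dart) : infl_dart :=
  match d with
  | inl e => inl (opp e)
  | inr (i, b) => inr (i, ~~ b)
  end.

Definition inflate : multigraph := @MultiGraph infl_vtx infl_dart infl_vert infl_opp.
End Inflate.

Definition valid_attach (G : multigraph) (v : vtx G) (g : dart G -> 'I_3) :=
  {in darts_at v &, injective g}.

(* v is an apex: pi(G^v) = 4 (G^v is unique up to isomorphism) *)
Definition apex (G : multigraph) (v : vtx G) : Prop :=
  exists g : dart G -> 'I_3, valid_attach v g /\ is_pmi (inflate v g) 4.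

Definition on_parallel_pair (G : multigraph) (v : vtx G) : Prop :=
  exists d1 d2 : dart G,
    [/\ vert d1 = v, vert d2 = v, d2 != d1, d2 != opp d1 &
        vert (opp d1) = vert (opp d2)].

(* Main.v *)
Require Import Defs.
From mathcomp Require Import all_boot zify.
From Stdlib Require Import Classical.
Set Implicit Arguments. Unset Strict Implicit. Unset Printing Implicit Defensive.
Section S.
Variables (G : multigraph) (v : vtx G) (g : dart G -> 'I_3).
Definition Mp (M : {set dart (inflate v g)}) : {set dart G} := [set d | (inl d : dart (inflate v g)) \in M].
Lemma vert_inl (e : dart G) (w : {x | x != v}) :
  (infl_vert v g (inl e) == inl w) = (vert e == val w).
Proof.
rewrite /=; case: insubP => [x Px <-|].
  by apply/eqP/eqP => [[->]|/val_inj->].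
move=> /negPn /eqP ->; apply/esym/negbTE; rewrite eq_sym; exact: (valP w).
Qed.
Lemma vert_inr (e : dart G) i :
  (infl_vert v g (inl e) == inr i) = (vert e == v) && (g e == i).
Proof.
rewrite /=; case: insubP => [x Px _|/negPn Hv].
  by rewrite (negbTE Px).
by rewrite Hv.
Qed.

Lemma pm_opp M : perfect_matching M -> forall d, (opp d \in Mp M) = (d \in Mp M).
Proof. by move=> [Ho _] d; rewrite !inE (Ho (inl d)). Qed.

Lemma pm_other M : perfect_matching M -> forall w, w != v -> #|Mp M :&: darts_at w| = 1.
Proof.
move=> [_ Hc] w Hw.
pose w' : {x | x != v} := exist _ w Hw.
have inj : injective (fun x : dart G => (inl x : dart (inflate v g))).
  by move=> x y [].
rewrite -(Hc (inl w')) -(card_imset _ inj).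
apply: eq_card => x; rewrite !inE.
case: x => [e|p].
  rewrite (vert_inl e w') /=.
  apply/imsetP/idP.
    by move=> [y]; rewrite !inE => /andP[H1 H2] [->]; rewrite H1 H2.
  by move=> /andP[H1 H2]; exists e => //; rewrite !inE H1 H2.
apply/imsetP/idP => [[y _ //]|].
by case: p => i [] /andP[_].
Qed.
Definition isl (T1 T2 : Type) (x : T1 + T2) := if x is inl _ then true else false.
Definition pT (x : dart (inflate v g)) : 'I_3 := if infl_vert v g x is inr i then i else ord0.

Lemma pm_at_v (wfG : wf G) (cub : cubic G) d1 d2 (H1 : vert d1 = v) (H2 : vert d2 = v)
  (n12 : d2 != d1) (n21 : d2 != opp d1) (Hp : vert (opp d1) = vert (opp d2)) M :
  perfect_matching M -> #|Mp M :&: darts_at v| = 1.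
Proof.
move=> PM; have [Ho Hc] := PM.
have [oo nf] := wfG.
have Hu : vert (opp d1) != v.
  apply/negP => /eqP Hv.
  have U : uniq [:: d1; d2; opp d1; opp d2].
    have f1 : d1 != d2 by rewrite eq_sym.
    have f2 : d1 != opp d1 by rewrite eq_sym nf.
    have f3 : d1 != opp d2 by apply/eqP => E; move: n21; rewrite E oo eqxx.
    have f4 : d2 != opp d2 by rewrite eq_sym nf.
    have f5 : opp d1 != opp d2 by rewrite (inj_eq (can_inj oo)).
    by rewrite /= !inE !negb_or f1 f2 f3 f4 f5 n21.
  have S : [:: d1; d2; opp d1; opp d2] \subset darts_at v.
    by apply/subsetP => x; rewrite !inE => /or4P[] /eqP->; rewrite ?H1 ?H2 ?Hv -?Hp ?Hv.
  by have := subset_leq_card S; rewrite (card_uniqP U) cub.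
set T : {set dart (inflate v g)} := [set x | ~~ isl (infl_vert v g x)].
have C1 : #|M :&: T| = 3.
  rewrite -sum1_card (partition_big pT predT) //=.
  rewrite (eq_bigr (fun _ => 1)) ?sum_nat_const ?card_ord //.
  move=> j _; rewrite -[RHS](Hc (inr j)) -sum1_card; apply: eq_bigl => x.
  rewrite !inE /pT /=; case: (infl_vert v g x) => [y|i] /=.
    by rewrite andbF.
  by rewrite andbT.
set A := Mp M :&: darts_at v.
set S : {set 'I_3} := [set i | (inr (i, true) : dart (inflate v g)) \in M].
have C2 : #|(M :&: T) :&: [set x : dart (inflate v g) | isl x]| = #|A|.
  have inj : injective (fun x : dart G => (inl x : dart (inflate v g))).
    by move=> x y [].
  rewrite -(card_imset _ inj); apply: eq_card => x; rewrite !inE.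
  case: x => [e|p] /=.
    apply/idP/imsetP.
      move=> /andP[/andP[Hm He] _]; exists e => //; rewrite !inE Hm /=.
      by move: He; rewrite /=; case: insubP => [x _ _ //| /negPn].
    move=> [y]; rewrite !inE => /andP[Hm /eqP Hy] [->]; rewrite Hm /=.
    by case: insubP => //; rewrite Hy eqxx.
  by rewrite andbF; apply/esym/imsetP => [[y _ //]].
have C3 : #|(M :&: T) :\: [set x : dart (inflate v g) | isl x]| = #|S| * 2.
  have inj : injective (fun x : 'I_3 * bool => (inr x : dart (inflate v g))).
    by move=> x y [].
  have -> : #|S| * 2 = #|setX S [set: bool]| by rewrite cardsX cardsT card_bool.
  rewrite -(card_imset _ inj); apply: eq_card => x; rewrite !inE.
  case: x => [e|[i b]] /=.
    by apply/esym/imsetP => [[y _ //]].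
  have -> : ~~ isl (if b then (inr i : vtx (inflate v g)) else inr (ordS i)) by case: b.
  rewrite andbT.
  apply/idP/imsetP.
    move=> Hm; exists (i, b) => //; rewrite !inE andbT.
    by case: b Hm => //; rewrite -(Ho (inr (i, false))).
  move=> [[j c]]; rewrite !inE andbT => Hm [-> ->].
  by case: c Hm => //; rewrite -(Ho (inr (j, false))).
have C4 := cardsID [set x : dart (inflate v g) | isl x] (M :&: T).
rewrite C1 C2 C3 in C4.
have AD : A \subset darts_at v by apply: subsetIr.
have A3 : #|A| <= 3 by rewrite -(cub v); apply: subset_leq_card.
have : #|A| = 1 \/ #|A| = 3.
  lia.
case => // A3'.
exfalso.
have EA : A =i darts_at v by apply/subset_cardP => //; rewrite A3' cub.
have M1 : d1 \in Mp M by have := EA d1; rewrite !inE H1 eqxx => /andP[].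
have M2 : d2 \in Mp M by have := EA d2; rewrite !inE H2 eqxx => /andP[].
have U : uniq [:: opp d1; opp d2].
  by rewrite /= inE (inj_eq (can_inj oo)) eq_sym n12.
have Sb : [:: opp d1; opp d2] \subset Mp M :&: darts_at (vert (opp d1)).
  apply/subsetP => x; rewrite !inE => /orP[] /eqP->.
    by move: M1; rewrite -(pm_opp PM) inE => ->; rewrite eqxx.
  by move: M2; rewrite -(pm_opp PM) inE => ->; rewrite Hp eqxx.
have := subset_leq_card Sb; rewrite (card_uniqP U) (pm_other PM Hu) //.
Qed.
End S.

Lemma min_pmi (G : multigraph) n : pm_coverable G n -> exists k, k <= n /\ is_pmi G k.
Proof.
elim: n {-2}n (leqnn n) => [|n IH] m Hm Hc.
  exists m; split => //; split => // j Hj; move: Hm Hj; case: m {Hc} => //.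
case: (classic (exists j, j < m /\ pm_coverable G j)) => [[j [Hj Hcj]]|N].
  have [k [Hk Hpk]] := IH j (leq_trans Hj Hm) Hcj.
  exists k; split => //; apply: leq_trans Hk (ltnW Hj).
exists m; split => //; split => // j Hj Hcj; apply: N; exists j; split => //.
Qed.

Theorem lemma6p5 (G : multigraph) (v : vtx G) :
  snark G ->
  (forall k, is_pmi G k -> 5 <= k) ->
  apex v ->
  ~ on_parallel_pair v.
Proof.
move=> [wfG _ cub _] Hk [g [_ [[Ms [HMs Hcov]] _]]] [d1 [d2 [H1 H2 n12 n21 Hp]]].
have cov4 : pm_coverable G 4.
  exists (fun i => Mp (Ms i)); split.
    move=> i; split; first exact: pm_opp.
    move=> w; case: (eqVneq w v) => [->|Hw].
      exact: (pm_at_v wfG cub H1 H2 n12 n21 Hp).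
    exact: pm_other.
  by move=> d; have [i Hi] := Hcov (inl d); exists i; rewrite inE.
have [k [Hk4 Hpk]] := min_pmi cov4.
by have := Hk k Hpk; case: k Hk4 {Hpk} => [|[|[|[|[|k]]]]].
Qed.
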